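(* For any $a,b>0$, the restriction of $J$ to $\mathcal P_{(a,b)}$ is coercive, i.e. $J(u,v)\to+\infty$ whenever $(u,v)\in\mathcal P_{(a,b)}$ and $\|(u,v)\|_{\mathbb D}\to\infty$.
   Context: Standing assumptions: $s\in(\tfrac12,1)$, $\mu_1,\mu_2,\beta>0$, $r_1,r_2>1$, $\frac{2(1+3s)}{1+s}<p,q,r_1+r_2<2_s=\frac{2(1+s)}{1-s}$. $\mathcal H^{1,s}(\mathbb R^2)$: $u\in L^2(\mathbb R^2)$ with $\partial_xu,(-\Delta)_y^{s/2}u\in L^2$ ($(-\Delta)_y^{s/2}$ the fractional Laplacian in $y$ only), norm $\|u\|^2=\|u\|_2^2+\|\partial_xu\|_2^2+\|(-\Delta)_y^{s/2}u\|_2^2$; $\mathbb D=\mathcal H^{1,s}\times\mathcal H^{1,s}$ with $\|(u,v)\|_{\mathbb D}^2=\|u\|^2+\|v\|^2$; $K(u)=\int(|\partial_xu|^2+|(-\Delta)_y^{s/2}u|^2)$. $J(u,v)=\tfrac12K(u)+\tfrac12K(v)-\frac{\mu_1}{p}\|u\|_p^p-\frac{\mu_2}{q}\|v\|_q^q-\beta\int|u|^{r_1}|v|^{r_2}$; $P(u,v)=sK(u)+sK(v)-\frac{(1+s)(p-2)}{2p}\mu_1\|u\|_p^p-\frac{(1+s)(q-2)}{2q}\mu_2\|v\|_q^q-\frac{(1+s)(r_1+r_2-2)}{2}\beta\int|u|^{r_1}|v|^{r_2}$; $\mathcal P=\{(u,v)\ne(0,0):P(u,v)=0\}$; $D_a=\{u:\|u\|_2^2\le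 a\}$; $\mathcal P_{(a,b)}=\mathcal P\cap(D_a\times D_b)$. *)

(* Defs.v *)
From HB Require Import structures.
From mathcomp Require Import all_boot all_order all_algebra.
From mathcomp Require Import all_classical all_reals all_analysis.
Set Implicit Arguments. Unset Strict Implicit. Unset Printing Implicit Defensive.
Import Order.TTheory GRing.Theory Num.Theory.
Import numFieldNormedType.Exports.
Local Open Scope classical_set_scope.
Local Open Scope ring_scope.

Section Defs.
Variable R : realType.

Definition leb1 := (@lebesgue_measure R).
Definition leb2 := (leb1 \x leb1)%E.

Definition Lpow (f : R * R -> R) (p : R) : \bar R :=
  (\int[leb2]_z (`|f z| `^ p)%:E)%E.

Definition Lmix (u v : R * R -> R) (r1 r2 : R) : \bar R :=
  (\int[leb2]_z ((`|u z| `^ r1) * (`|v z| `^ r2))%:E)%E.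

Definition gagliardo_y (s : R) (u : R * R -> R) : \bar R :=
  (\int[leb2]_z \int[leb1]_y'
     ((u z - u (z.1, y')) ^+ 2 / (`|z.2 - y'| `^ (1 + 2 * s)))%:E)%E.

(* Normalising constant C(1,s) = (\int_R (1 - cos t)/|t|^{1+2s} dt)^{-1}
   (Di Nezza--Palatucci--Valdinoci, (3.2)). *)
Definition Cfrac (s : R) : R :=
  (fine (\int[leb1]_t ((1 - cos t) / (`|t| `^ (1 + 2 * s)))%:E)%E)^-1.

(* ||(-Delta)_y^{s/2} u||_2^2 = C(1,s)/2 * Gagliardo_y(u)   (DNPV Prop. 3.4/3.6) *)
Definition fracy_norm2 (s : R) (u : R * R -> R) : \bar R :=
  ((Cfrac s / 2)%:E * gagliardo_y s u)%E.

Definition dx (phi : R * R -> R) (z : R * R) : R :=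
  'D_1 (fun t => phi (t, z.2)) z.1.

Definition test_fun (phi : R * R -> R) : Prop :=
  [/\ continuous phi,
      (exists B : R, forall z, B < `|z.1| \/ B < `|z.2| -> phi z = 0),
      (forall z, derivable (fun t => phi (t, z.2)) z.1 1)
    & continuous (dx phi)].

Definition weak_dx (u g : R * R -> R) : Prop :=
  forall phi, test_fun phi ->
    (\int[leb2]_z (u z * dx phi z)%:E = - \int[leb2]_z (g z * phi z)%:E)%E.

Definition inH1s (s : R) (u g : R * R -> R) : Prop :=
  [/\ measurable_fun setT u /\ measurable_fun setT g,
      (Lpow u 2 < +oo)%E, (Lpow g 2 < +oo)%E, weak_dx u g
    & (gagliardo_y s u < +oo)%E].

Definition Kf (s : R) (u g : R * R -> R) : \bar R :=
  (Lpow g 2 + fracy_norm2 s u)%E.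

Definition normH2 (s : R) (u g : R * R -> R) : \bar R :=
  (Lpow u 2 + Kf s u g)%E.

Definition normD2 (s : R) (u gu v gv : R * R -> R) : \bar R :=
  (normH2 s u gu + normH2 s v gv)%E.

Definition Jf (s mu1 mu2 beta r1 r2 p q : R) (u gu v gv : R * R -> R) : \bar R :=
  ((2^-1)%:E * Kf s u gu + (2^-1)%:E * Kf s v gv
   - (mu1 / p)%:E * Lpow u p - (mu2 / q)%:E * Lpow v q
   - beta%:E * Lmix u v r1 r2)%E.

Definition Pf (s mu1 mu2 beta r1 r2 p q : R) (u gu v gv : R * R -> R) : \bar R :=
  (s%:E * Kf s u gu + s%:E * Kf s v gv
   - ((1 + s) * (p - 2) / (2 * p) * mu1)%:E * Lpow u p
   - ((1 + s) * (q - 2) / (2 * q) * mu2)%:E * Lpow v q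
   - ((1 + s) * (r1 + r2 - 2) / 2 * beta)%:E * Lmix u v r1 r2)%E.

Definition is_zero2 (u v : R * R -> R) : Prop :=
  ({ae leb2, forall z, u z = 0%R}%E) /\ ({ae leb2, forall z, v z = 0%R}%E).

End Defs.

(* Main.v *)
Require Import Defs.
From HB Require Import structures.
From mathcomp Require Import all_boot all_order all_algebra.
From mathcomp Require Import all_classical all_reals all_analysis.
From mathcomp Require Import ring lra.
Import Order.TTheory GRing.Theory Num.Theory.
Import numFieldNormedType.Exports.
Local Open Scope ring_scope.
Lemma core_real (R : realType) (s e1 e2 e3 d1 d2 d3 a b M : R) :
  0 < s -> 2 * s < e1 -> 2 * s < e2 -> 2 * s < e3 -> 0 < d1 -> 0 < d2 -> 0 < d3 ->
  exists R0 : R, forall ku kv lu lv A B C : R,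
   0 <= ku -> 0 <= kv -> 0 <= lu -> 0 <= lv -> 0 <= A -> 0 <= B -> 0 <= C ->
   lu <= a -> lv <= b ->
   s * ku + s * kv - (e1 * d1) * A - (e2 * d2) * B - (e3 * d3) * C = 0 ->
   R0 <= lu + ku + (lv + kv) ->
   M <= 2^-1 * ku + 2^-1 * kv - d1 * A - d2 * B - d3 * C.
Proof.
move=> s0 h1 h2 h3 p1 p2 p3.
pose m := Num.min e1 (Num.min e2 e3).
have m1 : m <= e1 by rewrite /m ge_min lexx.
have m2 : m <= e2 by rewrite /m !ge_min lexx orbT.
have m3 : m <= e3 by rewrite /m !ge_min lexx !orbT.
have ms : 2 * s < m by rewrite /m !lt_min h1 h2 h3.
exists (a + b + `|M| * (2 * m) / (m - 2 * s)).
move=> ku kv lu lv A B C k1 k2 l1 l2 A0 B0 C0 la lb hP hR.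
have mpos : 0 < m - 2 * s by lra.
set K := ku + kv.
have hK : `|M| * (2 * m) / (m - 2 * s) <= K by rewrite /K; lra.
have hK' : `|M| * (2 * m) <= K * (m - 2 * s).
  by rewrite -ler_pdivrMr.
have hS : m * (d1 * A + d2 * B + d3 * C) <= s * K.
  have : s * K = e1 * d1 * A + e2 * d2 * B + e3 * d3 * C by rewrite /K; lra.
  move=> ->.
  have t1 : m * (d1 * A) <= e1 * (d1 * A) by apply: ler_wpM2r; [nra|].
  have t2 : m * (d2 * B) <= e2 * (d2 * B) by apply: ler_wpM2r; [nra|].
  have t3 : m * (d3 * C) <= e3 * (d3 * C) by apply: ler_wpM2r; [nra|].
  rewrite !mulrA in t1 t2 t3; lra.
have mM : M <= `|M| := ler_norm M.
have m0 : 0 < m by lra.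
suff : 2 * m * M <= 2 * m * (2^-1 * ku + 2^-1 * kv - d1 * A - d2 * B - d3 * C).
  by rewrite ler_pM2l //; lra.
have -> : 2 * m * (2^-1 * ku + 2^-1 * kv - d1 * A - d2 * B - d3 * C)
   = m * K - 2 * (m * (d1 * A + d2 * B + d3 * C)) by rewrite /K; field.
nra.
Qed.

Lemma nn_cases (R : realType) (x : \bar R) : (0 <= x)%E -> x = +oo%E \/ exists r, 0 <= r /\ x = r%:E.
Proof. case: x => [r| |] //=; rewrite ?lee_fin => h; [right; by exists r|by left]. Qed.

Lemma cinf (R : realType) (c : R) : 0 < c -> (c%:E * +oo = +oo)%E.
Proof. by move=> h; rewrite mulry gtr0_sg // mul1e. Qed.

Lemma nn_fin (R : realType) (x : \bar R) (a : R) : (0 <= x)%E -> (x <= a%:E)%E -> exists r, 0 <= r /\ r <= a /\ x = r%:E.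
Proof. case: x => [r| |] //=; rewrite ?lee_fin => h1 h2; by exists r. Qed.

Lemma nn_lt (R : realType) (x : \bar R) : (0 <= x)%E -> (x < +oo)%E -> exists r, 0 <= r /\ x = r%:E.
Proof. case: x => [r| |] //=; rewrite ?lee_fin => h1 h2; by exists r. Qed.

Lemma core_ext (R : realType) (s e1 e2 e3 d1 d2 d3 c1 c2 c3 a b M : R) :
  0 < s -> 2 * s < e1 -> 2 * s < e2 -> 2 * s < e3 -> 0 < d1 -> 0 < d2 -> 0 < d3 ->
  c1 = e1 * d1 -> c2 = e2 * d2 -> c3 = e3 * d3 ->
  exists R0 : R, forall ku kv lu lv A B C : \bar R,
   (0 <= ku)%E -> (0 <= kv)%E -> (0 <= lu)%E -> (0 <= lv)%E -> (0 <= A)%E -> (0 <= B)%E -> (0 <= C)%E ->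
   (ku < +oo)%E -> (kv < +oo)%E ->
   (lu <= a%:E)%E -> (lv <= b%:E)%E ->
   (s%:E * ku + s%:E * kv - c1%:E * A - c2%:E * B - c3%:E * C = 0)%E ->
   (R0%:E <= lu + ku + (lv + kv))%E ->
   (M%:E <= (2^-1)%:E * ku + (2^-1)%:E * kv - d1%:E * A - d2%:E * B - d3%:E * C)%E.
Proof.
move=> s0 h1 h2 h3 p1 p2 p3 E1 E2 E3.
have [R0 HR] := @core_real R s e1 e2 e3 d1 d2 d3 a b M s0 h1 h2 h3 p1 p2 p3.
exists R0 => ku kv lu lv A B C k1 k2 l1 l2 A0 B0 C0 kf1 kf2 la lb hP hR.
have c1p : 0 < c1 by rewrite E1; apply: mulr_gt0 => //; lra.
have c2p : 0 < c2 by rewrite E2; apply: mulr_gt0 => //; lra.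
have c3p : 0 < c3 by rewrite E3; apply: mulr_gt0 => //; lra.
have [x1 [x1p Ek1]] := @nn_lt _ _ k1 kf1.
have [x2 [x2p Ek2]] := @nn_lt _ _ k2 kf2.
have [y1 [y1p [y1a El1]]] := @nn_fin _ _ _ l1 la.
have [y2 [y2p [y2a El2]]] := @nn_fin _ _ _ l2 lb.
case: (@nn_cases _ _ A0) => [EA|[zA [zAp EA]]]; first by move: hP; rewrite EA cinf //= addeNy ?addNye.
case: (@nn_cases _ _ B0) => [EB|[zB [zBp EB]]]; first by move: hP; rewrite EB cinf //= addeNy ?addNye.
case: (@nn_cases _ _ C0) => [EC|[zC [zCp EC]]]; first by move: hP; rewrite EC cinf //= addeNy ?addNye.
subst A B C ku kv lu lv.
move: hP hR; rewrite -!EFinM; do 6 rewrite -?EFinD -?EFinB.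
rewrite lee_fin => /eqP; rewrite eqe => /eqP hP hR.
rewrite lee_fin.
apply: (HR x1 x2 y1 y2 zA zB zC) => //; by rewrite -?E1 -?E2 -?E3.
Qed.

Section Aux.
Variable R : realType.
Local Open Scope ereal_scope.

Lemma Lpow_ge0 (f : R * R -> R) (p : R) : 0 <= Lpow f p.
Proof. apply: integral_ge0 => z _; rewrite lee_fin; exact: powR_ge0. Qed.

Lemma Lmix_ge0 (u v : R * R -> R) (r1 r2 : R) : 0 <= Lmix u v r1 r2.
Proof. apply: integral_ge0 => z _; rewrite lee_fin; apply: mulr_ge0; exact: powR_ge0. Qed.

Lemma Cfrac_ge0 (s : R) : (0 <= Cfrac s)%R.
Proof.
rewrite /Cfrac invr_ge0; apply: fine_ge0; apply: integral_ge0 => t _.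
rewrite lee_fin; apply: divr_ge0; last exact: powR_ge0.
by rewrite subr_ge0 cos_le1.
Qed.

Lemma gag_ge0 (s : R) (u : R * R -> R) : 0 <= gagliardo_y s u.
Proof.
apply: integral_ge0 => z _; apply: integral_ge0 => y _.
rewrite lee_fin; apply: divr_ge0; [exact: sqr_ge0|exact: powR_ge0].
Qed.

Lemma Kf_ge0 (s : R) (u g : R * R -> R) : 0 <= Kf s u g.
Proof.
apply: adde_ge0; first exact: Lpow_ge0.
apply: mule_ge0; last exact: gag_ge0.
rewrite lee_fin; apply: divr_ge0 => //; exact: Cfrac_ge0.
Qed.

Lemma Kf_fin (s : R) (u g : R * R -> R) : inH1s s u g -> Kf s u g < +oo.
Proof.
case=> _ _ hg _ hgag; rewrite /Kf /fracy_norm2.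
have [x [_ ->]] := @nn_lt _ _ (Lpow_ge0 g 2) hg.
have [y [_ ->]] := @nn_lt _ _ (gag_ge0 s u) hgag.
by rewrite /fracy_norm2 -EFinM -EFinD ltry.
Qed.
End Aux.
Theorem corollary3p6 (R : realType) (s mu1 mu2 beta r1 r2 p q : R) :
  2^-1 < s -> s < 1 -> 0 < mu1 -> 0 < mu2 -> 0 < beta -> 1 < r1 -> 1 < r2 ->
  2 * (1 + 3 * s) / (1 + s) < p -> p < 2 * (1 + s) / (1 - s) ->
  2 * (1 + 3 * s) / (1 + s) < q -> q < 2 * (1 + s) / (1 - s) ->
  2 * (1 + 3 * s) / (1 + s) < r1 + r2 -> r1 + r2 < 2 * (1 + s) / (1 - s) ->
  forall a b : R, 0 < a -> 0 < b ->
  forall M : R, exists R0 : R,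
    forall u gu v gv : R * R -> R,
      inH1s s u gu -> inH1s s v gv ->
      ~ is_zero2 u v ->
      Pf s mu1 mu2 beta r1 r2 p q u gu v gv = 0%E ->
      (Lpow u 2 <= a%:E)%E -> (Lpow v 2 <= b%:E)%E ->
      (R0%:E <= normD2 s u gu v gv)%E ->
      (M%:E <= Jf s mu1 mu2 beta r1 r2 p q u gu v gv)%E.
Proof.
move=> hs1 hs2 hmu1 hmu2 hbeta hr1 hr2 hp1 hp2 hq1 hq2 hr3 hr4 a b ha hb M.
have s0 : 0 < s by apply: lt_trans hs1; rewrite invr_gt0.
have s1 : 0 < 1 + s by lra.
have key : forall x, 2 * (1 + 3 * s) / (1 + s) < x -> 2 * s < (1 + s) * (x - 2) / 2 /\ 0 < x.
  move=> x; rewrite ltr_pdivrMr // => hx; split; first by rewrite ltr_pdivlMr //; nra.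
  nra.
have [e1s p0] := key p hp1.
have [e2s q0] := key q hq1.
have [e3s _] := key (r1 + r2) hr3.
have E1 : (1 + s) * (p - 2) / (2 * p) * mu1 = (1 + s) * (p - 2) / 2 * (mu1 / p).
  by field; apply/eqP; lra.
have E2 : (1 + s) * (q - 2) / (2 * q) * mu2 = (1 + s) * (q - 2) / 2 * (mu2 / q).
  by field; apply/eqP; lra.
have [R0 HR] := @core_ext R s _ _ _ (mu1 / p) (mu2 / q) beta
  ((1 + s) * (p - 2) / (2 * p) * mu1) ((1 + s) * (q - 2) / (2 * q) * mu2)
  ((1 + s) * (r1 + r2 - 2) / 2 * beta) a b M s0 e1s e2s e3s
  (divr_gt0 hmu1 p0) (divr_gt0 hmu2 q0) hbeta E1 E2 erefl.
exists R0 => u gu v gv hu hv _ hP la lb hR.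
move: hP hR; rewrite /Pf /normD2 /normH2 /Jf => hP hR.
apply: (HR _ _ _ _ _ _ _ _ _ _ _ _ _ _ _ _ _ _ hP hR) => //;
  first [exact: Kf_ge0|exact: Lpow_ge0|exact: Lmix_ge0|exact: Kf_fin].
Qed.
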